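(* Let $M_\lambda$ ($\lambda>0$) and $M$ be as in the context. Then $M'_{\lambda}(x)\to M'(x)$ as $\lambda\to0^+$, uniformly for $x\in(0,\infty)$, with the points $x=1,2$ excluded.
   Context: For $\lambda>0$, $M_\lambda:[0,\infty)\to\mathbb R$ is defined by $M_\lambda(x)=0$ for $0\le x\le1$ and, for all $x>0$, $M_{\lambda}(x+1)=\int_0^x\frac{\lambda e^{-\lambda t}}{1-e^{-\lambda x}}\bigl(M_{\lambda}(t)+M_{\lambda}(x-t)\bigr)\,dt+1$. This is the expected number of intervals at saturation in the exponential parking problem. $M:[0,\infty)\to\mathbb R$ is defined by $M(x)=0$ for $0\le x\le1$ and, for $x>0$, $M(x+1)=\frac2x\int_0^xM(t)\,dt+1$. This is Rényi's uniform parking expectation. Following the paper's convention, $M'_\lambda(x)=M'(x)=0$ on $(0,1)\cup(1,2)$; the derivatives do not exist at $x=1,2$. *)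

(* Defs.v *)
From Stdlib Require Import Reals.
From Coquelicot Require Import Coquelicot.
Open Scope R_scope.

Definition is_M_lambda (lam : R) (f : R -> R) : Prop :=
  (forall x, 0 <= x <= 1 -> f x = 0) /\
  (forall x, 0 < x ->
     f (x + 1) =
       RInt (fun t => lam * exp (- (lam * t)) / (1 - exp (- (lam * x)))
                        * (f t + f (x - t))) 0 x + 1).

Definition is_M_renyi (f : R -> R) : Prop :=
  (forall x, 0 <= x <= 1 -> f x = 0) /\
  (forall x, 0 < x -> f (x + 1) = 2 / x * RInt f 0 x + 1).

(* Main.v *)
Require Import Defs.
From Stdlib Require Import Reals Lra ZArith.
From Coquelicot Require Import Coquelicot.
Open Scope R_scope.

Lemma cont_mult (f g : R -> R) x : continuous f x -> continuous g x -> continuous (fun y => f y * g y) x.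
Proof. intros H1 H2. exact (@continuous_mult R_UniformSpace R_AbsRing f g x H1 H2). Qed.
Lemma cont_plus (f g : R -> R) x : continuous f x -> continuous g x -> continuous (fun y => f y + g y) x.
Proof. intros H1 H2. exact (@continuous_plus R_UniformSpace R_AbsRing R_NormedModule f g x H1 H2). Qed.
Lemma der_mult (f g : R -> R) x df dg : is_derive f x df -> is_derive g x dg -> is_derive (fun y => f y * g y) x (df * g x + f x * dg).
Proof. intros H1 H2. exact (@is_derive_mult R_AbsRing f g x df dg H1 H2 Rmult_comm). Qed.
Lemma der_plus (f g : R -> R) x df dg : is_derive f x df -> is_derive g x dg -> is_derive (fun y => f y + g y) x (df + dg).
Proof. intros H1 H2. exact (@is_derive_plus R_AbsRing R_NormedModule f g x df dg H1 H2). Qed.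
Lemma der_minus (f g : R -> R) x df dg : is_derive f x df -> is_derive g x dg -> is_derive (fun y => f y - g y) x (df - dg).
Proof. intros H1 H2. exact (@is_derive_minus R_AbsRing R_NormedModule f g x df dg H1 H2). Qed.
Lemma nat_above z : exists n : nat, z < INR n.
Proof.
  destruct (Rlt_or_le z 0) as [H|H]. exists 0%nat; simpl; lra.
  destruct (archimed z) as [H1 H2]. exists (S (Z.to_nat (up z))).
  rewrite S_INR, INR_IZR_INZ, Z2Nat.id. lra.
  apply le_IZR. lra.
Qed.

Lemma exR_cont (h : R -> R) a b : (forall z, Rmin a b <= z <= Rmax a b -> continuous h z) -> ex_RInt h a b.
Proof. intros H. exact (@ex_RInt_continuous R_CompleteNormedModule h a b H). Qed.

Lemma cont_RInt (h : R -> R) a b : locally b (fun z => is_RInt h a z (RInt h a z)) -> continuous (fun z => RInt h a z) b.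
Proof. intros H. exact (@continuous_RInt_1 R_NormedModule h a b (fun z => RInt h a z) H). Qed.

Lemma RInt_cR (h : R -> R) a b : ex_RInt h a b -> is_RInt h a b (RInt h a b).
Proof. intros H. exact (@RInt_correct R_CompleteNormedModule h a b H). Qed.

Lemma loc_int (P : R -> Prop) x a b : a < x < b -> (forall y, a < y < b -> P y) -> locally x P.
Proof. intros [H1 H2] HP. apply (locally_interval P x a b); simpl; auto. Qed.

Lemma RInt_zero_fun (h : R -> R) X : 0 <= X -> (forall s, 0 < s < X -> h s = 0) -> RInt h 0 X = 0.
Proof.
  intros HX H. rewrite (RInt_ext h (fun _ => 0)).
  rewrite RInt_const. apply (@scal_zero_r R_Ring R_ModuleSpace).
  intros s Hs. rewrite Rmin_left, Rmax_right in Hs by lra. apply H; lra.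
Qed.

Lemma ex_RInt_zero_fun (h : R -> R) X : 0 <= X -> (forall s, 0 < s < X -> h s = 0) -> ex_RInt h 0 X.
Proof.
  intros HX H. apply ex_RInt_ext with (fun _ => 0).
  intros s Hs. rewrite Rmin_left, Rmax_right in Hs by lra. symmetry; apply H; lra.
  apply ex_RInt_const.
Qed.

Section Model.
Variables (f a1 a2 g1 g2 da1 da2 : R -> R).
Hypothesis Hg1 : forall z, continuous g1 z.
Hypothesis Hg2 : forall z, continuous g2 z.
Hypothesis Hda1 : forall x, 0 < x -> is_derive a1 x (da1 x).
Hypothesis Hda2 : forall x, 0 < x -> is_derive a2 x (da2 x).
Hypothesis H0 : forall x, 0 <= x <= 1 -> f x = 0.
Hypothesis Hform : forall x, 0 < x ->
  (forall g : R -> R, (forall z, continuous g z) -> ex_RInt (fun s => g s * f s) 0 x) ->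
  f (x + 1) = 1 + a1 x * RInt (fun s => g1 s * f s) 0 x + a2 x * RInt (fun s => g2 s * f s) 0 x.

Definition F x := 1 + a1 x * RInt (fun s => g1 s * f s) 0 x + a2 x * RInt (fun s => g2 s * f s) 0 x.

Lemma a1_cont x : 0 < x -> continuous a1 x.
Proof. intros H. apply (@ex_derive_continuous R_AbsRing R_NormedModule a1 x). eexists; apply Hda1; auto. Qed.
Lemma a2_cont x : 0 < x -> continuous a2 x.
Proof. intros H. apply (@ex_derive_continuous R_AbsRing R_NormedModule a2 x). eexists; apply Hda2; auto. Qed.

Lemma int_small (g : R -> R) X : 0 <= X <= 1 -> ex_RInt (fun s => g s * f s) 0 X.
Proof.
  intros HX. apply ex_RInt_zero_fun. lra. intros s Hs. rewrite H0 by lra. ring.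
Qed.

Lemma f_one x : 1 < x <= 2 -> f x = 1.
Proof.
  intros Hx. replace x with ((x - 1) + 1) by ring.
  rewrite Hform by (try lra; intros g _; apply int_small; lra).
  rewrite !RInt_zero_fun; try lra; intros s Hs; rewrite H0 by lra; ring.
Qed.

Lemma int_gf (g : R -> R) X : (forall z, continuous g z) -> 0 <= X ->
  (forall z, 2 <= z <= X -> continuous f z) -> ex_RInt (fun s => g s * f s) 0 X.
Proof.
  intros Hg HX Hc.
  destruct (Rle_or_lt X 1) as [H1|H1]. apply int_small; lra.
  assert (I12 : forall Y, 1 <= Y <= 2 -> ex_RInt (fun s => g s * f s) 0 Y).
  { intros Y HY. apply ex_RInt_Chasles with 1. apply int_small; lra.
    apply ex_RInt_ext with g. intros s Hs. rewrite Rmin_left, Rmax_right in Hs by lra.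
    rewrite f_one by lra. now rewrite Rmult_1_r.
    apply exR_cont. intros; apply Hg. }
  destruct (Rle_or_lt X 2) as [H2|H2]. apply I12; lra.
  apply ex_RInt_Chasles with 2. apply I12; lra.
  apply exR_cont. intros z Hz. rewrite Rmin_left, Rmax_right in Hz by lra.
  apply cont_mult; auto.
Qed.

Lemma cont_n n : forall z, 1 < z < INR n + 2 -> continuous f z.
Proof.
  induction n as [|n IH].
  - intros z Hz. simpl in Hz. apply continuous_ext_loc with (fun _ => 1).
    apply loc_int with 1 2. lra. intros y Hy. rewrite f_one; lra.
    apply continuous_const.
  - intros z Hz. rewrite S_INR in Hz.
    assert (Hint : forall g : R -> R, (forall z, continuous g z) -> forall y, 0 <= y < INR n + 2 ->
               ex_RInt (fun s => g s * f s) 0 y).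
    { intros g Hg y Hy. apply int_gf; auto. lra. intros w Hw. apply IH; lra. }
    apply continuous_ext_loc with (fun w => F (w - 1)).
    apply loc_int with 1 (INR n + 3). lra. intros y Hy.
    cbv beta. replace (f y) with (f ((y - 1) + 1)) by (f_equal; ring).
    unfold F. rewrite Hform. reflexivity. lra.
    intros g Hg. apply Hint; auto; lra.
    apply continuous_comp with (f := fun w => w - 1) (g := F).
    apply (cont_plus (fun w => w) (fun _ => -1)). apply continuous_id. apply continuous_const.
    unfold F. assert (Hx : 0 < z - 1 < INR n + 2) by lra.
    apply cont_plus. apply cont_plus. apply continuous_const.
    apply cont_mult. apply a1_cont; lra.
    apply cont_RInt. apply loc_int with 0 (INR n + 2). lra.
    intros y Hy. apply RInt_cR. apply Hint; auto; lra.
    apply cont_mult. apply a2_cont; lra.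
    apply cont_RInt. apply loc_int with 0 (INR n + 2). lra.
    intros y Hy. apply RInt_cR. apply Hint; auto; lra.
Qed.

Lemma f_cont z : 1 < z -> continuous f z.
Proof.
  intros Hz. destruct (nat_above z) as [n Hn]. apply (cont_n n). lra.
Qed.

Lemma f_int (g : R -> R) X : (forall z, continuous g z) -> 0 <= X -> ex_RInt (fun s => g s * f s) 0 X.
Proof. intros Hg HX. apply int_gf; auto. intros; apply f_cont; lra. Qed.

Lemma f_form x : 0 < x -> f (x + 1) = F x.
Proof. intros Hx. apply Hform; auto. intros g Hg. apply f_int; auto; lra. Qed.

Lemma I_deriv (g : R -> R) x : (forall z, continuous g z) -> 1 < x ->
  is_derive (fun y => RInt (fun s => g s * f s) 0 y) x (g x * f x).
Proof.
  intros Hg Hx. apply (@is_derive_RInt R_NormedModule (fun s => g s * f s) (fun y => RInt (fun s => g s * f s) 0 y) 0 x).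
  apply loc_int with 0 (x + 1). lra. intros y Hy. apply RInt_cR. apply f_int; auto; lra.
  apply cont_mult; auto. apply f_cont; auto.
Qed.

Definition dF x := da1 x * RInt (fun s => g1 s * f s) 0 x + a1 x * (g1 x * f x)
   + (da2 x * RInt (fun s => g2 s * f s) 0 x + a2 x * (g2 x * f x)).

Lemma f_deriv x : 1 < x -> is_derive f (x + 1) (dF x).
Proof.
  intros Hx.
  apply is_derive_ext_loc with (fun w => F (w - 1)).
  apply loc_int with 1 (x + 2). lra. intros y Hy.
  cbv beta. replace (f y) with (f ((y - 1) + 1)) by (f_equal; ring).
  rewrite f_form. reflexivity. lra.
  assert (H : is_derive F x (dF x)).
  { unfold F, dF. apply der_plus. 
    replace (da1 x * RInt (fun s : R => g1 s * f s) 0 x + a1 x * (g1 x * f x))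
      with (0 + (da1 x * RInt (fun s : R => g1 s * f s) 0 x + a1 x * (g1 x * f x))) by ring.
    apply der_plus. apply (is_derive_const 1).
    apply der_mult. apply Hda1; lra. apply I_deriv; auto.
    apply der_mult. apply Hda2; lra. apply I_deriv; auto. }
  replace (dF x) with (scal 1 (dF x)).
  apply (is_derive_comp F (fun w => w - 1)). replace (x + 1 - 1) with x by ring. exact H.
  auto_derive; auto; ring.
  apply (@scal_one R_AbsRing R_NormedModule).
Qed.

Lemma f_deriv0 y : 0 < y < 1 \/ 1 < y < 2 -> is_derive f y 0.
Proof.
  intros [Hy|Hy].
  - apply is_derive_ext_loc with (fun _ => 0).
    apply loc_int with 0 1. lra. intros w Hw. rewrite H0; lra. apply (is_derive_const 0).
  - apply is_derive_ext_loc with (fun _ => 1).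
    apply loc_int with 1 2. lra. intros w Hw. rewrite f_one; lra. apply (is_derive_const 1).
Qed.


Lemma RInt_lin A B x : 0 <= x ->
  RInt (fun s => (A * g1 s + B * g2 s) * f s) 0 x =
  A * RInt (fun s => g1 s * f s) 0 x + B * RInt (fun s => g2 s * f s) 0 x.
Proof.
  intros Hx.
  assert (E1 : ex_RInt (fun s => g1 s * f s) 0 x) by (apply f_int; auto).
  assert (E2 : ex_RInt (fun s => g2 s * f s) 0 x) by (apply f_int; auto).
  rewrite (RInt_ext _ (fun s => plus (scal A (g1 s * f s)) (scal B (g2 s * f s)))).
  rewrite (@RInt_plus R_CompleteNormedModule).
  rewrite (@RInt_scal R_CompleteNormedModule) by auto.
  rewrite (@RInt_scal R_CompleteNormedModule) by auto. reflexivity.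
  apply (@ex_RInt_scal R_NormedModule); auto.
  apply (@ex_RInt_scal R_NormedModule); auto.
  intros s _. unfold plus, scal; simpl. unfold mult; simpl. ring.
Qed.

Lemma f_kint A B x : 0 <= x -> ex_RInt (fun s => (A * g1 s + B * g2 s) * f s) 0 x.
Proof.
  intros Hx. apply (f_int (fun s => A * g1 s + B * g2 s)); auto.
  intros z. apply cont_plus; apply cont_mult; auto; apply continuous_const.
Qed.

Lemma f_kernel x : 0 < x -> f (x + 1) = 1 + RInt (fun s => (a1 x * g1 s + a2 x * g2 s) * f s) 0 x.
Proof. intros Hx. rewrite f_form, RInt_lin by lra. unfold F. ring. Qed.

Lemma u_kernel x : 1 < x -> Derive f (x + 1) =
  (a1 x * g1 x + a2 x * g2 x) * f x + RInt (fun s => (da1 x * g1 s + da2 x * g2 s) * f s) 0 x.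
Proof.
  intros Hx. rewrite (is_derive_unique f (x + 1) (dF x)) by (apply f_deriv; auto).
  rewrite RInt_lin by lra. unfold dF. ring.
Qed.

Lemma u_eq x : 1 < x -> Derive f (x + 1) = dF x.
Proof. intros Hx. apply is_derive_unique. apply f_deriv; auto. Qed.

Lemma f_exd x : 2 < x -> ex_derive f x.
Proof. intros Hx. exists (dF (x - 1)). replace x with ((x - 1) + 1) at 1 by ring. apply f_deriv. lra. Qed.

End Model.

Lemma der_cont (g : R -> R) x l : is_derive g x l -> continuity_pt g x.
Proof.
  intros H. apply continuity_pt_filterlim.
  apply (@ex_derive_continuous R_AbsRing R_NormedModule g x). exists l; exact H.
Qed.

Lemma Rabs_le_inv a b : Rabs a <= b -> -b <= a <= b.
Proof. unfold Rabs; destruct (Rcase_abs a); lra. Qed.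

Section MaxP.
Variables (f Psi Psi1 Psi2 : R -> R).
Hypothesis Hd : forall x, 2 < x -> ex_derive f x.
Hypothesis Hc : forall x, 1 < x -> continuous f x.
Hypothesis Hi : forall X, 0 <= X -> ex_RInt (fun s => Psi2 s * f s) 0 X.
Hypothesis HP : forall x, is_derive Psi x (Psi1 x).
Hypothesis HP1 : forall x, is_derive Psi1 x (Psi2 x).
Hypothesis HP2 : forall x, continuous Psi2 x.

Definition PP x := Psi1 x * f x - RInt (fun s => Psi2 s * f s) 0 x.

Lemma PP_deriv x : 2 < x -> is_derive PP x (Psi1 x * Derive f x).
Proof.
  intros Hx.
  replace (Psi1 x * Derive f x) with ((Psi2 x * f x + Psi1 x * Derive f x) - Psi2 x * f x) by ring.
  apply der_minus. apply der_mult. apply HP1. apply Derive_correct. apply Hd; auto.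
  apply (@is_derive_RInt R_NormedModule (fun s => Psi2 s * f s) (fun y => RInt (fun s => Psi2 s * f s) 0 y) 0 x).
  apply loc_int with 0 (x + 1). lra. intros y Hy. apply RInt_cR. apply Hi; lra.
  apply cont_mult; auto. apply Hc; lra.
Qed.

Lemma maxp_step T c E x : 2 < T -> T <= x ->
  (forall t, T <= t -> 0 < Psi t /\ 0 <= Psi1 t) ->
  (forall t, T <= t -> Derive f (t + 1) * Psi t = PP t) ->
  Rabs (Derive f (T + 1) - c) <= E ->
  (forall s, T <= s <= x -> Rabs (Derive f s - c) <= E) ->
  Rabs (Derive f (x + 1) - c) <= E.
Proof.
  intros HT Hx Hpos Hrel HT1 Hs.
  assert (key : forall sg, sg = 1 \/ sg = -1 ->
     sg * (Derive f (x + 1) - c) * Psi x <= E * Psi x).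
  { intros sg Hsg.
    set (g := fun t => E * Psi t - sg * (PP t - c * Psi t)).
    assert (Hg : forall t, 2 < t -> is_derive g t (Psi1 t * (E - sg * (Derive f t - c)))).
    { intros t Ht. unfold g.
      replace (Psi1 t * (E - sg * (Derive f t - c))) with
        (E * Psi1 t - sg * (Psi1 t * Derive f t - c * Psi1 t)) by ring.
      apply der_minus. apply is_derive_scal. apply HP.
      apply is_derive_scal. apply der_minus. apply PP_deriv; auto. apply is_derive_scal. apply HP. }
    destruct (MVT_gen g T x (fun t => Psi1 t * (E - sg * (Derive f t - c)))) as [xi [Hxi Heq]].
    { intros t Ht. rewrite Rmin_left, Rmax_right in Ht by lra. apply Hg. lra. }
    { intros t Ht. rewrite Rmin_left, Rmax_right in Ht by lra. apply der_cont with (Psi1 t * (E - sg * (Derive f t - c))). apply Hg. lra. }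
    rewrite Rmin_left, Rmax_right in Hxi by lra.
    assert (H1 : 0 <= Psi1 xi * (E - sg * (Derive f xi - c))).
    { apply Rmult_le_pos. apply Hpos; lra.
      specialize (Hs xi ltac:(lra)). destruct Hsg as [-> | ->];
      apply Rabs_le_inv in Hs; lra. }
    assert (H2 : 0 <= g T).
    { unfold g. rewrite <- (Hrel T) by lra.
      destruct (Hpos T (Rle_refl T)) as [HpT _].
      apply Rabs_le_inv in HT1.
      destruct Hsg as [-> | ->]; nra. }
    assert (H3 : 0 <= g x).
    { assert (0 <= (Psi1 xi * (E - sg * (Derive f xi - c))) * (x - T)) by (apply Rmult_le_pos; lra). lra. }
    unfold g in H3. rewrite <- (Hrel x) in H3 by lra. nra. }
  destruct (Hpos x Hx) as [Hpx _].
  pose proof (key 1 (or_introl eq_refl)) as K1.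
  pose proof (key (-1) (or_intror eq_refl)) as K2.
  apply Rabs_le. split.
  - apply (Rmult_le_reg_r (Psi x)); auto. lra.
  - apply (Rmult_le_reg_r (Psi x)); auto. lra.
Qed.

Lemma maxp T c E : 2 < T ->
  (forall t, T <= t -> 0 < Psi t /\ 0 <= Psi1 t) ->
  (forall t, T <= t -> Derive f (t + 1) * Psi t = PP t) ->
  (forall y, T <= y <= T + 1 -> Rabs (Derive f y - c) <= E) ->
  forall y, T <= y -> Rabs (Derive f y - c) <= E.
Proof.
  intros HT Hpos Hrel Hinit.
  assert (Hn : forall n : nat, forall y, T <= y <= T + INR n + 1 -> Rabs (Derive f y - c) <= E).
  { induction n as [|n IH].
    - intros y Hy. simpl in Hy. apply Hinit; lra.
    - intros y Hy. rewrite S_INR in Hy.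
      destruct (Rle_or_lt y (T + INR n + 1)) as [Hy'|Hy']. apply IH; lra.
      replace y with ((y - 1) + 1) by ring.
      apply maxp_step with T; auto. pose proof (pos_INR n). lra.
      apply Hinit; lra.
      intros s Hs. apply IH; lra. }
  intros y Hy. destruct (nat_above (y - T)) as [n Hn'].
  apply (Hn n). lra.
Qed.
End MaxP.

Fixpoint Cseq (K Sb : R) (n : nat) : R :=
  match n with O => 0 | S m => (INR m + 1) * (K * Cseq K Sb m + Sb) end.

Lemma Cseq_pos K Sb n : 0 <= K -> 0 <= Sb -> 0 <= Cseq K Sb n.
Proof.
  intros HK HS. induction n as [|n IH]; simpl. lra.
  apply Rmult_le_pos. pose proof (pos_INR n); lra. nra.
Qed.

Lemma abs_diff_bound a b c d K eta D Sb : Rabs a <= K -> Rabs (a - b) <= eta ->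
  Rabs (c - d) <= D -> Rabs d <= Sb -> 0 <= K -> 0 <= eta ->
  Rabs (a * c - b * d) <= K * D + eta * Sb.
Proof.
  intros H1 H2 H3 H4 HK He.
  replace (a * c - b * d) with (a * (c - d) + (a - b) * d) by ring.
  eapply Rle_trans. apply Rabs_triang. rewrite !Rabs_mult.
  apply Rplus_le_compat; apply Rmult_le_compat; auto using Rabs_pos.
Qed.

Lemma RInt_diff (h1 h2 : R -> R) x : ex_RInt h1 0 x -> ex_RInt h2 0 x ->
  RInt h1 0 x - RInt h2 0 x = RInt (fun s => h1 s - h2 s) 0 x.
Proof.
  intros H1 H2. symmetry. exact (@RInt_minus R_CompleteNormedModule h1 h2 0 x H1 H2).
Qed.

Lemma ex_RInt_diff (h1 h2 : R -> R) x : ex_RInt h1 0 x -> ex_RInt h2 0 x ->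
  ex_RInt (fun s => h1 s - h2 s) 0 x.
Proof. intros H1 H2. exact (@ex_RInt_minus R_NormedModule h1 h2 0 x H1 H2). Qed.

Section Compare.
Variables (f f0 : R -> R) (k k0 dk dk0 : R -> R -> R) (N K eta Sb : R).
Hypothesis H0f : forall x, 0 <= x <= 1 -> f x = 0.
Hypothesis H0f0 : forall x, 0 <= x <= 1 -> f0 x = 0.
Hypothesis H1f : forall x, 1 < x <= 2 -> f x = 1.
Hypothesis H1f0 : forall x, 1 < x <= 2 -> f0 x = 1.
Hypothesis Hk : forall x, 0 < x -> f (x + 1) = 1 + RInt (fun s => k x s * f s) 0 x.
Hypothesis Hk0 : forall x, 0 < x -> f0 (x + 1) = 1 + RInt (fun s => k0 x s * f0 s) 0 x.
Hypothesis Hik : forall x, 0 < x -> ex_RInt (fun s => k x s * f s) 0 x.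
Hypothesis Hik0 : forall x, 0 < x -> ex_RInt (fun s => k0 x s * f0 s) 0 x.
Hypothesis Hb : forall x s, 1 <= x <= N -> 0 <= s <= x -> Rabs (k x s) <= K /\ Rabs (k x s - k0 x s) <= eta.
Hypothesis HS : forall s, 0 <= s <= N -> Rabs (f0 s) <= Sb.
Hypothesis HK : 0 <= K.
Hypothesis Heta : 0 <= eta.
Hypothesis HSp : 0 <= Sb.

Lemma compare_f n : INR n <= N -> forall y, 0 <= y <= INR n + 1 -> Rabs (f y - f0 y) <= eta * Cseq K Sb n.
Proof.
  induction n as [|n IH].
  - intros _ y Hy. simpl in Hy. rewrite H0f, H0f0 by lra. simpl. rewrite Rminus_0_r, Rabs_R0. lra.
  - intros HN y Hy. rewrite S_INR in HN, Hy.
    pose proof (Cseq_pos K Sb (S n) HK HSp) as Cp.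
    pose proof (pos_INR n) as Hn.
    destruct (Rle_or_lt y 1) as [Hy1|Hy1].
    { rewrite H0f, H0f0 by lra. rewrite Rminus_0_r, Rabs_R0. apply Rmult_le_pos; lra. }
    destruct (Rle_or_lt y 2) as [Hy2|Hy2].
    { rewrite H1f, H1f0 by lra. rewrite Rminus_eq_0, Rabs_R0. apply Rmult_le_pos; lra. }
    replace y with ((y - 1) + 1) by ring.
    rewrite Hk, Hk0 by lra.
    replace (1 + RInt (fun s : R => k (y - 1) s * f s) 0 (y - 1) -
       (1 + RInt (fun s : R => k0 (y - 1) s * f0 s) 0 (y - 1))) with
      (RInt (fun s : R => k (y - 1) s * f s) 0 (y - 1) - RInt (fun s : R => k0 (y - 1) s * f0 s) 0 (y - 1)) by ring.
    rewrite RInt_diff by (apply Hik || apply Hik0; lra).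
    eapply Rle_trans. apply abs_RInt_le_const with (M := K * (eta * Cseq K Sb n) + eta * Sb). lra.
    apply ex_RInt_diff; (apply Hik || apply Hik0; lra).
    intros t Ht. destruct (Hb (y - 1) t ltac:(lra) ltac:(lra)) as [B1 B2].
    apply abs_diff_bound; auto. apply IH; lra. apply HS; lra.
    simpl. pose proof (Cseq_pos K Sb n HK HSp).
    replace (eta * ((INR n + 1) * (K * Cseq K Sb n + Sb))) with ((INR n + 1) * (K * (eta * Cseq K Sb n) + eta * Sb)) by ring.
    apply Rmult_le_compat_r. apply Rplus_le_le_0_compat; repeat apply Rmult_le_pos; auto. lra.
Qed.

Hypothesis Hu : forall x, 1 < x -> Derive f (x + 1) = k x x * f x + RInt (fun s => dk x s * f s) 0 x.
Hypothesis Hu0 : forall x, 1 < x -> Derive f0 (x + 1) = k0 x x * f0 x + RInt (fun s => dk0 x s * f0 s) 0 x.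
Hypothesis Hidk : forall x, 0 < x -> ex_RInt (fun s => dk x s * f s) 0 x.
Hypothesis Hidk0 : forall x, 0 < x -> ex_RInt (fun s => dk0 x s * f0 s) 0 x.
Hypothesis Hdb : forall x s, 1 <= x <= N -> 0 <= s <= x -> Rabs (dk x s) <= K /\ Rabs (dk x s - dk0 x s) <= eta.

Lemma compare_u D : 0 <= D -> 1 <= N -> (forall s, 0 <= s <= N -> Rabs (f s - f0 s) <= eta * D) ->
  forall x, 1 < x <= N -> Rabs (Derive f (x + 1) - Derive f0 (x + 1)) <= eta * ((1 + N) * (K * D + Sb)).
Proof.
  intros HD HN HfD x Hx. rewrite Hu, Hu0 by lra.
  replace (k x x * f x + RInt (fun s : R => dk x s * f s) 0 x - (k0 x x * f0 x + RInt (fun s : R => dk0 x s * f0 s) 0 x))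
    with ((k x x * f x - k0 x x * f0 x) + (RInt (fun s : R => dk x s * f s) 0 x - RInt (fun s : R => dk0 x s * f0 s) 0 x)) by ring.
  rewrite RInt_diff by (apply Hidk || apply Hidk0; lra).
  eapply Rle_trans. apply Rabs_triang.
  replace (eta * ((1 + N) * (K * D + Sb))) with ((K * (eta * D) + eta * Sb) + N * (K * (eta * D) + eta * Sb)) by ring.
  apply Rplus_le_compat.
  - destruct (Hb x x ltac:(lra) ltac:(lra)). apply abs_diff_bound; auto. apply HfD; lra. apply HS; lra.
  - eapply Rle_trans. apply abs_RInt_le_const with (M := K * (eta * D) + eta * Sb). lra.
    apply ex_RInt_diff; (apply Hidk || apply Hidk0; lra).
    intros t Ht. destruct (Hdb x t ltac:(lra) ltac:(lra)).
    apply abs_diff_bound; auto. apply HfD; lra. apply HS; lra.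
    apply Rmult_le_compat_r. apply Rplus_le_le_0_compat; repeat apply Rmult_le_pos; auto. lra.
Qed.
End Compare.

Definition ra1 (x : R) := 2 / x.
Definition rda1 (x : R) := - (2 / x ^ 2).
Definition c0 (x : R) := 0.
Definition c1 (x : R) := 1.
Definition rPsi (x : R) := x ^ 2 / 2.
Definition rPsi1 (x : R) := x.

Lemma c0_cont z : continuous c0 z. Proof. apply continuous_const. Qed.
Lemma c1_cont z : continuous c1 z. Proof. apply continuous_const. Qed.
Lemma ra1_der x : 0 < x -> is_derive ra1 x (rda1 x).
Proof. intros Hx. unfold ra1, rda1. auto_derive. lra. field. lra. Qed.
Lemma c0_der x : 0 < x -> is_derive c0 x (c0 x).
Proof. intros _. unfold c0. apply (is_derive_const 0). Qed.
Lemma rPsi_der x : is_derive rPsi x (rPsi1 x).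
Proof. unfold rPsi, rPsi1. auto_derive; auto. field. Qed.
Lemma rPsi1_der x : is_derive rPsi1 x (c1 x).
Proof. unfold rPsi1, c1. auto_derive; auto. Qed.

Section Renyi.
Variable M : R -> R.
Hypothesis HM : is_M_renyi M.

Lemma rH0 : forall x, 0 <= x <= 1 -> M x = 0.
Proof. apply HM. Qed.

Lemma rHform : forall x, 0 < x ->
  (forall g : R -> R, (forall z, continuous g z) -> ex_RInt (fun s => g s * M s) 0 x) ->
  M (x + 1) = 1 + ra1 x * RInt (fun s => c1 s * M s) 0 x + c0 x * RInt (fun s => c0 s * M s) 0 x.
Proof.
  intros x Hx _. destruct HM as [_ H]. rewrite H by auto.
  rewrite (RInt_ext (fun s => c1 s * M s) M). unfold ra1, c0. ring.
  intros s _. unfold c1. now rewrite Rmult_1_l.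
Qed.

Definition rargs := (f_cont M ra1 c0 c1 c0 rda1 c0 c1_cont c0_cont ra1_der c0_der rH0 rHform).

Lemma r_cont z : 1 < z -> continuous M z.
Proof. exact (f_cont M ra1 c0 c1 c0 rda1 c0 c1_cont c0_cont ra1_der c0_der rH0 rHform z). Qed.
Lemma r_int (g : R -> R) X : (forall z, continuous g z) -> 0 <= X -> ex_RInt (fun s => g s * M s) 0 X.
Proof. exact (f_int M ra1 c0 c1 c0 rda1 c0 c1_cont c0_cont ra1_der c0_der rH0 rHform g X). Qed.
Lemma r_one x : 1 < x <= 2 -> M x = 1.
Proof. exact (f_one M ra1 c0 c1 c0 rH0 rHform x). Qed.
Lemma r_kernel x : 0 < x -> M (x + 1) = 1 + RInt (fun s => (ra1 x * c1 s + c0 x * c0 s) * M s) 0 x.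
Proof. exact (f_kernel M ra1 c0 c1 c0 rda1 c0 c1_cont c0_cont ra1_der c0_der rH0 rHform x). Qed.
Lemma r_kint A B x : 0 <= x -> ex_RInt (fun s => (A * c1 s + B * c0 s) * M s) 0 x.
Proof. exact (f_kint M ra1 c0 c1 c0 rda1 c0 c1_cont c0_cont ra1_der c0_der rH0 rHform A B x). Qed.
Lemma r_ukernel x : 1 < x -> Derive M (x + 1) =
  (ra1 x * c1 x + c0 x * c0 x) * M x + RInt (fun s => (rda1 x * c1 s + c0 x * c0 s) * M s) 0 x.
Proof. exact (u_kernel M ra1 c0 c1 c0 rda1 c0 c1_cont c0_cont ra1_der c0_der rH0 rHform x). Qed.
Lemma r_ueq x : 1 < x -> Derive M (x + 1) = dF M ra1 c0 c1 c0 rda1 c0 x.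
Proof. exact (u_eq M ra1 c0 c1 c0 rda1 c0 c1_cont c0_cont ra1_der c0_der rH0 rHform x). Qed.
Lemma r_exd x : 2 < x -> ex_derive M x.
Proof. exact (f_exd M ra1 c0 c1 c0 rda1 c0 c1_cont c0_cont ra1_der c0_der rH0 rHform x). Qed.
Lemma r_d0 y : 0 < y < 1 \/ 1 < y < 2 -> Derive M y = 0.
Proof. intros H. apply is_derive_unique. exact (f_deriv0 M ra1 c0 c1 c0 rH0 rHform y H). Qed.

Lemma r_bound n : forall y, 0 <= y <= INR n + 1 -> Rabs (M y) <= 3 ^ n.
Proof.
  induction n as [|n IH].
  - intros y Hy. simpl in Hy. rewrite rH0 by lra. rewrite Rabs_R0. simpl; lra.
  - intros y Hy. rewrite S_INR in Hy. pose proof (pow_lt 3 n ltac:(lra)) as H3.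
    destruct (Rle_or_lt y 1) as [Hy1|Hy1].
    { rewrite rH0 by lra. rewrite Rabs_R0. simpl; lra. }
    replace y with ((y - 1) + 1) by ring. rewrite rHform by (try lra; intros g Hg; apply r_int; auto; lra).
    unfold c0. rewrite Rmult_0_l, Rplus_0_r.
    eapply Rle_trans. apply Rabs_triang. rewrite Rabs_R1, Rabs_mult.
    assert (HI : Rabs (RInt (fun s => c1 s * M s) 0 (y - 1)) <= (y - 1 - 0) * 3 ^ n).
    { apply abs_RInt_le_const. lra. apply r_int. apply c1_cont. lra.
      intros t Ht. unfold c1. rewrite Rmult_1_l. apply IH. lra. }
    unfold ra1. rewrite Rabs_right by (apply Rle_ge; apply Rmult_le_pos; [lra| left; apply Rinv_0_lt_compat; lra]).
    simpl. apply Rle_trans with (1 + 2 / (y - 1) * ((y - 1 - 0) * 3 ^ n)).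
    apply Rplus_le_compat_l. apply Rmult_le_compat_l. apply Rmult_le_pos; [lra| left; apply Rinv_0_lt_compat; lra]. auto.
    replace (2 / (y - 1) * ((y - 1 - 0) * 3 ^ n)) with (2 * 3 ^ n) by (field; lra). pose proof (pow_R1_Rle 3 n ltac:(lra)). lra.
Qed.

Lemma r_rel t : 1 < t -> Derive M (t + 1) * rPsi t = PP M rPsi1 c1 t.
Proof.
  intros Ht. rewrite r_ueq by auto. unfold dF, PP, rPsi, rPsi1, rda1, ra1, c0, c1.
  field. lra.
Qed.

Lemma r_pos t : 1 <= t -> 0 < rPsi t /\ 0 <= rPsi1 t.
Proof. intros Ht. unfold rPsi, rPsi1. split; nra. Qed.

Lemma r_maxp T c E : 2 < T ->
  (forall y, T <= y <= T + 1 -> Rabs (Derive M y - c) <= E) ->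
  forall y, T <= y -> Rabs (Derive M y - c) <= E.
Proof.
  intros HT Hi. apply (maxp M rPsi rPsi1 c1 r_exd r_cont (fun X HX => r_int c1 X c1_cont HX) rPsi_der rPsi1_der c1_cont T c E HT).
  intros t Ht; apply r_pos; lra.
  intros t Ht; apply r_rel; lra. auto.
Qed.

Lemma r_U : forall y, 3 <= y -> Rabs (Derive M y) <= 18.
Proof.
  intros y Hy. replace (Derive M y) with (Derive M y - 0) by ring.
  apply r_maxp with 3; auto. lra. clear y Hy.
  intros y Hy. rewrite Rminus_0_r.
  replace y with ((y - 1) + 1) by ring. rewrite r_ueq by lra.
  unfold dF, c0, c1, ra1, rda1. rewrite !Rmult_0_l, Rplus_0_r, Rmult_1_l.
  assert (HS : forall s, 0 <= s <= 3 -> Rabs (M s) <= 9).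
  { intros s Hs. replace 9 with (3 ^ 2) by ring. apply r_bound. simpl. lra. }
  assert (HI : Rabs (RInt (fun s => 1 * M s) 0 (y - 1)) <= (y - 1 - 0) * 9).
  { apply abs_RInt_le_const. lra. apply (r_int c1). apply c1_cont. lra.
    intros t Ht. rewrite Rmult_1_l. apply HS. lra. }
  repeat rewrite Rplus_0_r. eapply Rle_trans. apply Rabs_triang. rewrite !Rabs_mult.
  assert (HM1 := HS (y - 1) ltac:(lra)).
  assert (P1 : 0 <= 2 / (y - 1) ^ 2) by (unfold Rdiv; apply Rmult_le_pos; [lra| left; apply Rinv_0_lt_compat, pow_lt; lra]).
  assert (P2 : 0 <= 2 / (y - 1)) by (unfold Rdiv; apply Rmult_le_pos; [lra| left; apply Rinv_0_lt_compat; lra]).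
  rewrite Rabs_Ropp, (Rabs_right (2 / (y - 1) ^ 2)), (Rabs_right (2 / (y - 1))) by lra.
  apply Rle_trans with (2 / (y - 1) ^ 2 * ((y - 1 - 0) * 9) + 2 / (y - 1) * 9).
  apply Rplus_le_compat; apply Rmult_le_compat_l; auto.
  replace (2 / (y - 1) ^ 2 * ((y - 1 - 0) * 9) + 2 / (y - 1) * 9) with (36 / (y - 1)) by (field; lra).
  apply Rle_trans with (36 / 2). apply Rmult_le_compat_l. lra. apply Rinv_le_contravar; lra. lra.
Qed.

Lemma r_osc T : 4 <= T -> forall y, T <= y <= T + 1 -> Rabs (Derive M y - Derive M T) <= 144 / T.
Proof.
  intros HT y Hy.
  set (x := y - 1). set (x' := T - 1).
  assert (Ex : Derive M y * rPsi x = PP M rPsi1 c1 x).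
  { unfold x. replace y with ((y - 1) + 1) at 1 by ring. apply r_rel. lra. }
  assert (Ex' : Derive M T * rPsi x' = PP M rPsi1 c1 x').
  { unfold x'. replace T with ((T - 1) + 1) at 1 by ring. apply r_rel. lra. }
  destruct (MVT_gen (PP M rPsi1 c1) x' x (fun t => rPsi1 t * Derive M t)) as [xi [Hxi Heq]].
  { intros t Ht. rewrite Rmin_left, Rmax_right in Ht by (unfold x, x'; lra).
    apply (PP_deriv M rPsi1 c1 r_exd r_cont (fun X HX => r_int c1 X c1_cont HX) rPsi1_der c1_cont). unfold x' in Ht; lra. }
  { intros t Ht. rewrite Rmin_left, Rmax_right in Ht by (unfold x, x'; lra).
    apply der_cont with (rPsi1 t * Derive M t).
    apply (PP_deriv M rPsi1 c1 r_exd r_cont (fun X HX => r_int c1 X c1_cont HX) rPsi1_der c1_cont). unfold x' in Ht; lra. }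
  rewrite Rmin_left, Rmax_right in Hxi by (unfold x, x'; lra).
  assert (Hd : (Derive M y - Derive M T) * rPsi x = (PP M rPsi1 c1 x - PP M rPsi1 c1 x') + Derive M T * (rPsi x' - rPsi x)).
  { rewrite <- Ex, <- Ex'. ring. }
  rewrite Heq in Hd.
  assert (U1 := r_U xi ltac:(unfold x' in Hxi; lra)).
  assert (U2 := r_U T ltac:(lra)).
  assert (B : Rabs ((Derive M y - Derive M T) * rPsi x) <= 36 * T).
  { rewrite Hd. eapply Rle_trans. apply Rabs_triang. rewrite !Rabs_mult.
    unfold rPsi1, rPsi. 
    assert (Rabs xi <= T) by (rewrite Rabs_right; unfold x, x' in *; lra).
    assert (Rabs (x - x') <= 1) by (rewrite Rabs_right; unfold x, x' in *; lra).
    assert (Rabs (x' ^ 2 / 2 - x ^ 2 / 2) <= T).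
    { replace (x' ^ 2 / 2 - x ^ 2 / 2) with ((x' - x) * ((x' + x) / 2)) by field.
      rewrite Rabs_mult. unfold x, x' in *. rewrite Rabs_left1 by lra. rewrite Rabs_right by lra. nra. }
    assert (0 <= Rabs xi * Rabs (Derive M xi) <= T * 18).
    { split. apply Rmult_le_pos; apply Rabs_pos. apply Rmult_le_compat; auto using Rabs_pos. }
    assert (Rabs xi * Rabs (Derive M xi) * Rabs (x - x') <= T * 18) by nra.
    assert (Rabs (Derive M T) * Rabs (x' ^ 2 / 2 - x ^ 2 / 2) <= 18 * T).
    { apply Rmult_le_compat; auto using Rabs_pos. }
    lra. }
  rewrite Rabs_mult in B. rewrite (Rabs_right (rPsi x)) in B by (unfold rPsi, x; apply Rle_ge; nra).
  assert (Hp : T ^ 2 / 4 <= rPsi x) by (unfold rPsi, x; nra).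
  assert (Rabs (Derive M y - Derive M T) * (T ^ 2 / 4) <= 36 * T).
  { eapply Rle_trans; [|apply B]. apply Rmult_le_compat_l. apply Rabs_pos. auto. }
  apply (Rmult_le_reg_r T). lra. unfold Rdiv. rewrite Rmult_assoc, Rinv_l by lra. nra.
Qed.

End Renyi.

Lemma conv_sub (h : R -> R) x : ex_RInt h 0 x -> is_RInt (fun t => h (x - t)) 0 x (RInt h 0 x).
Proof.
  intros Hh.
  assert (H2 : is_RInt h x 0 (opp (RInt h 0 x))).
  { apply (@is_RInt_swap R_NormedModule). apply RInt_cR; auto. }
  assert (H3 : is_RInt (fun y => scal (-1) (h (-1 * y + x))) 0 x (opp (RInt h 0 x))).
  { apply (@is_RInt_comp_lin R_NormedModule). replace (-1 * 0 + x) with x by ring.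
    replace (-1 * x + x) with 0 by ring. exact H2. }
  assert (H4 := @is_RInt_scal R_NormedModule _ 0 x (-1) _ H3).
  replace (RInt h 0 x) with (scal (-1) (opp (RInt h 0 x))).
  apply (@is_RInt_ext R_NormedModule) with (2 := H4).
  intros t _. unfold scal; simpl; unfold mult; simpl. replace (-1 * t + x) with (x - t) by ring. ring.
  unfold scal, opp; simpl; unfold mult; simpl. ring.
Qed.

Definition la1 lam x := 1 / (1 - exp (- (lam * x))).
Definition la2 lam x := exp (- (lam * x)) / (1 - exp (- (lam * x))).
Definition lg1 lam s := lam * exp (- (lam * s)).
Definition lg2 lam s := lam * exp (lam * s).
Definition lda lam x := - (lam * exp (- (lam * x))) / (1 - exp (- (lam * x))) ^ 2.
Definition lPsi lam x := (exp (lam * x) + exp (- (lam * x)) - 2) / (2 * lam).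
Definition lPsi1 lam x := (exp (lam * x) - exp (- (lam * x))) / 2.
Definition lPsi2 lam x := lam * (exp (lam * x) + exp (- (lam * x))) / 2.

Lemma one_m_exp lam x : 0 < lam -> 0 < x -> 0 < 1 - exp (- (lam * x)).
Proof.
  intros Hl Hx. rewrite <- exp_0 at 1. assert (exp (- (lam * x)) < exp 0).
  apply exp_increasing. nra. rewrite exp_0 in *. lra.
Qed.

Section Lam.
Variable lam : R.
Hypothesis Hlam : 0 < lam.

Lemma lg1_cont z : continuous (lg1 lam) z.
Proof. apply (@ex_derive_continuous R_AbsRing R_NormedModule). unfold lg1. auto_derive. auto. Qed.
Lemma lg2_cont z : continuous (lg2 lam) z.
Proof. apply (@ex_derive_continuous R_AbsRing R_NormedModule). unfold lg2. auto_derive. auto. Qed.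
Lemma la1_der x : 0 < x -> is_derive (la1 lam) x (lda lam x).
Proof.
  intros Hx. pose proof (one_m_exp lam x Hlam Hx). unfold la1, lda. auto_derive. lra. field. lra.
Qed.
Lemma la2_der x : 0 < x -> is_derive (la2 lam) x (lda lam x).
Proof.
  intros Hx. pose proof (one_m_exp lam x Hlam Hx). unfold la2, lda. auto_derive. lra. field. lra.
Qed.
Lemma lPsi_der x : is_derive (lPsi lam) x (lPsi1 lam x).
Proof. unfold lPsi, lPsi1. auto_derive; auto. field. lra. Qed.
Lemma lPsi1_der x : is_derive (lPsi1 lam) x (lPsi2 lam x).
Proof. unfold lPsi1, lPsi2. auto_derive; auto. field. Qed.
Lemma lPsi2_cont z : continuous (lPsi2 lam) z.
Proof. apply (@ex_derive_continuous R_AbsRing R_NormedModule). unfold lPsi2. auto_derive. auto. Qed.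

Variable f : R -> R.
Hypothesis Hf : is_M_lambda lam f.

Lemma lH0 : forall x, 0 <= x <= 1 -> f x = 0.
Proof. apply Hf. Qed.

Lemma lHform : forall x, 0 < x ->
  (forall g : R -> R, (forall z, continuous g z) -> ex_RInt (fun s => g s * f s) 0 x) ->
  f (x + 1) = 1 + la1 lam x * RInt (fun s => lg1 lam s * f s) 0 x + la2 lam x * RInt (fun s => lg2 lam s * f s) 0 x.
Proof.
  intros x Hx Hi. destruct Hf as [_ H]. rewrite H by auto.
  pose proof (one_m_exp lam x Hlam Hx) as Hd.
  assert (E1 : ex_RInt (fun s => lg1 lam s * f s) 0 x) by (apply Hi, lg1_cont).
  assert (E2 : ex_RInt (fun s => lg2 lam s * f s) 0 x) by (apply Hi, lg2_cont).
  assert (H1 := RInt_cR _ _ _ E1).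
  assert (H2 := conv_sub _ x E2).
  assert (H3 := @is_RInt_plus R_NormedModule _ _ 0 x _ _
     (@is_RInt_scal R_NormedModule _ 0 x (la1 lam x) _ H1)
     (@is_RInt_scal R_NormedModule _ 0 x (la2 lam x) _ H2)).
  assert (H4 : is_RInt (fun t => lam * exp (- (lam * t)) / (1 - exp (- (lam * x))) * (f t + f (x - t))) 0 x
     (la1 lam x * RInt (fun s => lg1 lam s * f s) 0 x + la2 lam x * RInt (fun s => lg2 lam s * f s) 0 x)).
  { apply (@is_RInt_ext R_NormedModule) with (2 := H3).
    intros t _. unfold plus, scal; simpl; unfold mult; simpl.
    unfold la1, la2, lg1, lg2.
    assert (HE : exp (- (lam * t)) = exp (- (lam * x)) * exp (lam * (x - t))).
    { rewrite <- exp_plus. f_equal. ring. }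
    rewrite HE. field. lra. }
  rewrite (is_RInt_unique _ _ _ _ H4). ring.
Qed.

Lemma l_cont z : 1 < z -> continuous f z.
Proof. exact (f_cont f (la1 lam) (la2 lam) (lg1 lam) (lg2 lam) (lda lam) (lda lam) lg1_cont lg2_cont la1_der la2_der lH0 lHform z). Qed.
Lemma l_int (g : R -> R) X : (forall z, continuous g z) -> 0 <= X -> ex_RInt (fun s => g s * f s) 0 X.
Proof. exact (f_int f (la1 lam) (la2 lam) (lg1 lam) (lg2 lam) (lda lam) (lda lam) lg1_cont lg2_cont la1_der la2_der lH0 lHform g X). Qed.
Lemma l_one x : 1 < x <= 2 -> f x = 1.
Proof. exact (f_one f (la1 lam) (la2 lam) (lg1 lam) (lg2 lam) lH0 lHform x). Qed.
Lemma l_kernel x : 0 < x -> f (x + 1) = 1 + RInt (fun s => (la1 lam x * lg1 lam s + la2 lam x * lg2 lam s) * f s) 0 x.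
Proof. exact (f_kernel f (la1 lam) (la2 lam) (lg1 lam) (lg2 lam) (lda lam) (lda lam) lg1_cont lg2_cont la1_der la2_der lH0 lHform x). Qed.
Lemma l_kint A B x : 0 <= x -> ex_RInt (fun s => (A * lg1 lam s + B * lg2 lam s) * f s) 0 x.
Proof. exact (f_kint f (la1 lam) (la2 lam) (lg1 lam) (lg2 lam) (lda lam) (lda lam) lg1_cont lg2_cont la1_der la2_der lH0 lHform A B x). Qed.
Lemma l_ukernel x : 1 < x -> Derive f (x + 1) =
  (la1 lam x * lg1 lam x + la2 lam x * lg2 lam x) * f x + RInt (fun s => (lda lam x * lg1 lam s + lda lam x * lg2 lam s) * f s) 0 x.
Proof. exact (u_kernel f (la1 lam) (la2 lam) (lg1 lam) (lg2 lam) (lda lam) (lda lam) lg1_cont lg2_cont la1_der la2_der lH0 lHform x). Qed.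
Lemma l_ueq x : 1 < x -> Derive f (x + 1) = dF f (la1 lam) (la2 lam) (lg1 lam) (lg2 lam) (lda lam) (lda lam) x.
Proof. exact (u_eq f (la1 lam) (la2 lam) (lg1 lam) (lg2 lam) (lda lam) (lda lam) lg1_cont lg2_cont la1_der la2_der lH0 lHform x). Qed.
Lemma l_exd x : 2 < x -> ex_derive f x.
Proof. exact (f_exd f (la1 lam) (la2 lam) (lg1 lam) (lg2 lam) (lda lam) (lda lam) lg1_cont lg2_cont la1_der la2_der lH0 lHform x). Qed.
Lemma l_d0 y : 0 < y < 1 \/ 1 < y < 2 -> Derive f y = 0.
Proof. intros H. apply is_derive_unique. exact (f_deriv0 f (la1 lam) (la2 lam) (lg1 lam) (lg2 lam) lH0 lHform y H). Qed.

Lemma l_rel t : 1 < t -> Derive f (t + 1) * lPsi lam t = PP f (lPsi1 lam) (lPsi2 lam) t.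
Proof.
  intros Ht. rewrite l_ueq by auto. unfold dF, PP.
  assert (Heq : forall s, lPsi2 lam s * f s = (/2 * lg1 lam s + /2 * lg2 lam s) * f s).
  { intros s. unfold lPsi2, lg1, lg2. field. }
  rewrite (RInt_ext (fun s => lPsi2 lam s * f s) (fun s => (/2 * lg1 lam s + /2 * lg2 lam s) * f s)).
  2:{ intros s _. apply Heq. }
  rewrite (RInt_lin f (la1 lam) (la2 lam) (lg1 lam) (lg2 lam) (lda lam) (lda lam) lg1_cont lg2_cont la1_der la2_der lH0 lHform) by lra.
  pose proof (one_m_exp lam t Hlam ltac:(lra)) as Hd.
  assert (HE : exp (- (lam * t)) = / exp (lam * t)) by apply exp_Ropp.
  assert (Hp : 0 < exp (lam * t)) by apply exp_pos.
  unfold la1, la2, lg1, lg2, lda, lPsi, lPsi1. rewrite HE in *.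
  assert (exp (lam * t) - 1 <> 0).
  { intro Hc. assert (exp (lam * t) = 1) by lra. rewrite H in Hd. lra. }
  field. repeat split; lra.
Qed.

Lemma l_pos t : 1 <= t -> 0 < lPsi lam t /\ 0 <= lPsi1 lam t.
Proof.
  intros Ht. pose proof (one_m_exp lam t Hlam ltac:(lra)) as Hd.
  assert (HE : exp (- (lam * t)) = / exp (lam * t)) by apply exp_Ropp.
  assert (Hp : 0 < exp (lam * t)) by apply exp_pos.
  unfold lPsi, lPsi1. rewrite HE in *.
  set (E := exp (lam * t)) in *.
  assert (HE1 : 1 < E).
  { assert (/ E < 1) by lra. apply (Rmult_lt_reg_r (/ E)). apply Rinv_0_lt_compat; auto.
    rewrite Rinv_r by lra. lra. }
  assert (Hinv : / E < 1) by lra.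
  split.
  - apply Rdiv_lt_0_compat; [|lra].
    assert (E + / E - 2 = (E - 1) ^ 2 / E) by (field; lra). rewrite H.
    apply Rdiv_lt_0_compat; [|lra]. apply pow_lt. lra.
  - assert (0 < / E) by (apply Rinv_0_lt_compat; lra). lra.
Qed.

Lemma l_maxp T c E : 2 < T ->
  (forall y, T <= y <= T + 1 -> Rabs (Derive f y - c) <= E) ->
  forall y, T <= y -> Rabs (Derive f y - c) <= E.
Proof.
  intros HT Hi. apply (maxp f (lPsi lam) (lPsi1 lam) (lPsi2 lam) l_exd l_cont
     (fun X HX => l_int (lPsi2 lam) X lPsi2_cont HX) lPsi_der lPsi1_der lPsi2_cont T c E HT).
  intros t Ht; apply l_pos; lra.
  intros t Ht; apply l_rel; lra. auto.
Qed.

End Lam.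

Lemma div_le_div a b c d : 0 < b -> 0 < d -> a * d <= c * b -> a / b <= c / d.
Proof.
  intros Hb Hd H. replace (a / b) with ((a * d) * / (b * d)) by (field; lra).
  replace (c / d) with ((c * b) * / (b * d)) by (field; lra).
  apply Rmult_le_compat_r. left; apply Rinv_0_lt_compat; nra. auto.
Qed.

Lemma ratio_bound Q c B : 0 < c -> 1 <= B -> c / B <= Q -> Q <= c * B ->
  Rabs (Q - c) <= c * (B - 1) /\ Rabs Q <= c * B.
Proof.
  intros Hc HB H1 H2.
  assert (Hq : 0 < c / B) by (apply Rdiv_lt_0_compat; lra).
  assert (c - c / B <= c * (B - 1)).
  { replace (c - c / B) with (c * (B - 1) / B) by (field; lra).
    apply (Rmult_le_reg_r B). lra. unfold Rdiv. rewrite Rmult_assoc, Rinv_l by lra.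
    assert (0 <= c * (B - 1)) by nra. nra. }
  split. apply Rabs_le. split; lra. rewrite Rabs_right; lra.
Qed.

Section KB.
Variables (lam N x s : R).
Hypothesis Hlam : 0 < lam <= 1.
Hypothesis Hx : 1 <= x <= N.
Hypothesis Hs : 0 <= s <= x.

Let v := lam * x.
Let E := exp v.
Let e2 := exp (lam * s).

Lemma v_pos : 0 < v. Proof. unfold v; nra. Qed.
Lemma E_ge : 1 + v <= E. Proof. apply exp_ineq1_le. Qed.
Lemma E_le : E * (1 - v) <= 1.
Proof.
  pose proof (exp_ineq1_le (- v)). rewrite exp_Ropp in H. fold E in H.
  assert (0 < E) by apply exp_pos.
  apply (Rmult_le_compat_l E) in H; [|lra]. rewrite Rinv_r in H by lra. lra.
Qed.
Lemma e2_bounds : 1 <= e2 <= E.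
Proof.
  unfold e2, E, v. split.
  rewrite <- exp_0. destruct (Req_dec (lam * s) 0) as [H|H]. rewrite H; lra.
  left; apply exp_increasing; nra.
  destruct (Req_dec (lam * s) (lam * x)) as [H|H]. rewrite H; lra.
  left; apply exp_increasing; nra.
Qed.

Lemma E_bound1 : E <= exp (2 * lam * N).
Proof.
  unfold E, v. destruct (Req_dec (lam * x) (2 * lam * N)) as [H|H]. rewrite H; lra.
  left; apply exp_increasing; nra.
Qed.
Lemma E_bound2 : E <= exp (2 * N).
Proof.
  unfold E, v. destruct (Req_dec (lam * x) (2 * N)) as [H|H]. rewrite H; lra.
  left; apply exp_increasing; nra.
Qed.
Lemma E2_bound1 : E * E <= exp (2 * lam * N).
Proof.
  unfold E, v. rewrite <- exp_plus. destruct (Req_dec (lam * x + lam * x) (2 * lam * N)) as [H|H]. rewrite H; lra.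
  left; apply exp_increasing; nra.
Qed.
Lemma E2_bound2 : E * E <= exp (2 * N).
Proof.
  unfold E, v. rewrite <- exp_plus. destruct (Req_dec (lam * x + lam * x) (2 * N)) as [H|H]. rewrite H; lra.
  left; apply exp_increasing; nra.
Qed.

Lemma k_eq : la1 lam x * lg1 lam s + la2 lam x * lg2 lam s = lam * (E + e2 ^ 2) / ((E - 1) * e2).
Proof.
  pose proof E_ge. pose proof v_pos. pose proof e2_bounds.
  unfold la1, la2, lg1, lg2. rewrite !exp_Ropp. fold e2. replace (exp (lam * x)) with E by reflexivity.
  field. all: try lra.
Qed.

Lemma dk_eq : lda lam x * lg1 lam s + lda lam x * lg2 lam s = - (lam ^ 2 * E * (1 + e2 ^ 2) / ((E - 1) ^ 2 * e2)).
Proof.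
  pose proof E_ge. pose proof v_pos. pose proof e2_bounds.
  unfold lda, lg1, lg2. rewrite !exp_Ropp. fold e2. replace (exp (lam * x)) with E by reflexivity.
  field. all: try lra.
Qed.

Lemma kbounds :
  Rabs (la1 lam x * lg1 lam s + la2 lam x * lg2 lam s) <= 2 * exp (2 * N) /\
  Rabs (la1 lam x * lg1 lam s + la2 lam x * lg2 lam s - (ra1 x * c1 s + c0 x * c0 s)) <= 2 * (exp (2 * lam * N) - 1).
Proof.
  pose proof E_ge as H1. pose proof E_le as H2. pose proof v_pos as H3. pose proof e2_bounds as H4.
  pose proof E_bound1. pose proof E_bound2.
  rewrite k_eq. unfold ra1, c1, c0. replace (2 / x * 1 + 0 * 0) with (2 / x) by ring.
  assert (Hx2 : 2 / x = 2 * lam / v) by (unfold v; field; lra).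
  assert (R : Rabs (lam * (E + e2 ^ 2) / ((E - 1) * e2) - 2 / x) <= 2 / x * (E - 1) /\
              Rabs (lam * (E + e2 ^ 2) / ((E - 1) * e2)) <= 2 / x * E).
  { apply ratio_bound. apply Rdiv_lt_0_compat; lra. lra.
    - rewrite Hx2. unfold Rdiv at 1. replace (2 * lam / v * / E) with (2 * lam / (v * E)) by (field; lra).
      apply div_le_div. nra. nra.
      assert (2 * e2 <= E + e2 ^ 2) by nra.
      assert (E - 1 <= v * E) by nra.
      assert (2 * e2 * (E - 1) <= (E + e2 ^ 2) * (v * E)).
      { apply Rle_trans with ((E + e2 ^ 2) * (E - 1)). apply Rmult_le_compat_r; lra.
        apply Rmult_le_compat_l; nra. }
      nra.
    - rewrite Hx2. replace (2 * lam / v * E) with (2 * lam * E / v) by (field; lra).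
      apply div_le_div. nra. lra.
      assert (E + e2 ^ 2 <= 2 * E * e2) by nra.
      assert ((E + e2 ^ 2) * v <= 2 * E * e2 * (E - 1)).
      { apply Rle_trans with (2 * E * e2 * v). apply Rmult_le_compat_r; lra.
        apply Rmult_le_compat_l; nra. }
      nra. }
  destruct R as [R1 R2].
  assert (Hc : 2 / x <= 2).
  { unfold Rdiv. apply Rle_trans with (2 * 1). apply Rmult_le_compat_l. lra.
    rewrite <- Rinv_1. apply Rinv_le_contravar; lra. lra. }
  assert (0 <= 2 / x) by (apply Rlt_le, Rdiv_lt_0_compat; lra).
  split.
  - eapply Rle_trans. apply R2. apply Rmult_le_compat; lra.
  - eapply Rle_trans. apply R1. apply Rmult_le_compat; lra.
Qed.

Lemma dkbounds :
  Rabs (lda lam x * lg1 lam s + lda lam x * lg2 lam s) <= 2 * exp (2 * N) /\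
  Rabs (lda lam x * lg1 lam s + lda lam x * lg2 lam s - (rda1 x * c1 s + c0 x * c0 s)) <= 2 * (exp (2 * lam * N) - 1).
Proof.
  pose proof E_ge as H1. pose proof E_le as H2. pose proof v_pos as H3. pose proof e2_bounds as H4.
  pose proof E2_bound1. pose proof E2_bound2.
  rewrite dk_eq. unfold rda1, c1, c0.
  set (Q := lam ^ 2 * E * (1 + e2 ^ 2) / ((E - 1) ^ 2 * e2)).
  replace (- Q - (- (2 / x ^ 2) * 1 + 0 * 0)) with (- (Q - 2 / x ^ 2)) by ring.
  rewrite !Rabs_Ropp.
  assert (Hx2 : 2 / x ^ 2 = 2 * lam ^ 2 / v ^ 2) by (unfold v; field; lra).
  assert (R : Rabs (Q - 2 / x ^ 2) <= 2 / x ^ 2 * (E * E - 1) /\ Rabs Q <= 2 / x ^ 2 * (E * E)).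
  { apply ratio_bound. apply Rdiv_lt_0_compat. lra. apply pow_lt; lra. nra.
    - rewrite Hx2. unfold Q. replace (2 * lam ^ 2 / v ^ 2 / (E * E)) with (2 * lam ^ 2 / (v ^ 2 * (E * E))) by (field; lra).
      apply div_le_div. apply Rmult_lt_0_compat. apply pow_lt; lra. nra. apply Rmult_lt_0_compat. apply pow_lt; lra. lra.
      assert (2 * e2 <= 1 + e2 ^ 2) by nra.
      assert (0 <= E - 1 <= v * E) by nra.
      assert ((E - 1) ^ 2 <= (v * E) ^ 2) by (apply pow_incr; lra).
      assert (2 * e2 * (E - 1) ^ 2 <= (1 + e2 ^ 2) * (v * E) ^ 2).
      { apply Rle_trans with ((1 + e2 ^ 2) * (E - 1) ^ 2). apply Rmult_le_compat_r. apply pow2_ge_0. lra.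
        apply Rmult_le_compat_l; nra. }
      assert (0 <= lam ^ 2) by (apply pow2_ge_0).
      assert ((1 + e2 ^ 2) * (v * E) ^ 2 <= E * (1 + e2 ^ 2) * (v ^ 2 * (E * E))).
      { replace (E * (1 + e2 ^ 2) * (v ^ 2 * (E * E))) with (E * ((1 + e2 ^ 2) * (v * E) ^ 2)) by ring.
        assert (0 <= (1 + e2 ^ 2) * (v * E) ^ 2) by (apply Rmult_le_pos; [nra | apply pow2_ge_0]). nra. }
      assert (2 * lam ^ 2 * ((E - 1) ^ 2 * e2) <= lam ^ 2 * E * (1 + e2 ^ 2) * (v ^ 2 * (E * E))).
      { replace (2 * lam ^ 2 * ((E - 1) ^ 2 * e2)) with (lam ^ 2 * (2 * e2 * (E - 1) ^ 2)) by ring.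
        replace (lam ^ 2 * E * (1 + e2 ^ 2) * (v ^ 2 * (E * E))) with (lam ^ 2 * (E * (1 + e2 ^ 2) * (v ^ 2 * (E * E)))) by ring.
        apply Rmult_le_compat_l; lra. }
      lra.
    - rewrite Hx2. unfold Q. replace (2 * lam ^ 2 / v ^ 2 * (E * E)) with (2 * lam ^ 2 * (E * E) / v ^ 2) by (field; lra).
      apply div_le_div. apply Rmult_lt_0_compat. apply pow_lt; lra. lra. apply pow_lt; lra.
      assert (1 + e2 ^ 2 <= 2 * E * e2) by nra.
      assert (0 <= v <= E - 1) by nra.
      assert (v ^ 2 <= (E - 1) ^ 2) by (apply pow_incr; lra).
      assert ((1 + e2 ^ 2) * v ^ 2 <= 2 * E * e2 * (E - 1) ^ 2).
      { apply Rle_trans with (2 * E * e2 * v ^ 2). apply Rmult_le_compat_r. apply pow2_ge_0. lra.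
        apply Rmult_le_compat_l; nra. }
      assert (0 <= lam ^ 2 * E) by (apply Rmult_le_pos; [apply pow2_ge_0 | lra]).
      replace (lam ^ 2 * E * (1 + e2 ^ 2) * v ^ 2) with ((lam ^ 2 * E) * ((1 + e2 ^ 2) * v ^ 2)) by ring.
      replace (2 * lam ^ 2 * (E * E) * ((E - 1) ^ 2 * e2)) with ((lam ^ 2 * E) * (2 * E * e2 * (E - 1) ^ 2)) by ring.
      apply Rmult_le_compat_l; lra. }
  destruct R as [R1 R2].
  assert (Hc : 2 / x ^ 2 <= 2).
  { unfold Rdiv. apply Rle_trans with (2 * 1). apply Rmult_le_compat_l. lra.
    rewrite <- Rinv_1. apply Rinv_le_contravar. lra. nra. lra. }
  assert (0 <= 2 / x ^ 2) by (apply Rlt_le, Rdiv_lt_0_compat; [lra | apply pow_lt; lra]).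
  split.
  - eapply Rle_trans. apply R2. apply Rmult_le_compat; nra.
  - eapply Rle_trans. apply R1. apply Rmult_le_compat; nra.
Qed.
End KB.

Lemma fin_horizon (f M : R -> R) (lam : R) (m : nat) :
  0 < lam <= 1 -> is_M_lambda lam f -> is_M_renyi M ->
  let N := INR m + 1 in
  let K := 2 * exp (2 * N) in
  let Sb := 3 ^ m in
  let eta := 2 * (exp (2 * lam * N) - 1) in
  forall x, 1 < x <= N ->
  Rabs (Derive f (x + 1) - Derive M (x + 1)) <= eta * ((1 + N) * (K * Cseq K Sb m + Sb)).
Proof.
  intros Hl Hf HM N K Sb eta.
  assert (HN : 1 <= N) by (unfold N; pose proof (pos_INR m); lra).
  assert (HK : 0 <= K) by (unfold K; pose proof (exp_pos (2 * N)); lra).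
  assert (Heta : 0 <= eta).
  { unfold eta. assert (1 <= exp (2 * lam * N)).
    { rewrite <- exp_0. destruct (Req_dec (2 * lam * N) 0) as [H|H]. rewrite H; lra.
      left; apply exp_increasing. nra. }
    lra. }
  assert (HSp : 0 <= Sb) by (unfold Sb; apply pow_le; lra).
  assert (Hlp : 0 < lam) by lra.
  assert (Hb : forall x s, 1 <= x <= N -> 0 <= s <= x ->
     Rabs (la1 lam x * lg1 lam s + la2 lam x * lg2 lam s) <= K /\
     Rabs (la1 lam x * lg1 lam s + la2 lam x * lg2 lam s - (ra1 x * c1 s + c0 x * c0 s)) <= eta).
  { intros x s Hx Hs. apply kbounds; auto. }
  assert (Hdb : forall x s, 1 <= x <= N -> 0 <= s <= x ->
     Rabs (lda lam x * lg1 lam s + lda lam x * lg2 lam s) <= K /\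
     Rabs (lda lam x * lg1 lam s + lda lam x * lg2 lam s - (rda1 x * c1 s + c0 x * c0 s)) <= eta).
  { intros x s Hx Hs. apply dkbounds; auto. }
  assert (HS : forall s, 0 <= s <= N -> Rabs (M s) <= Sb).
  { intros s Hs. apply r_bound; auto. }
  assert (HfD : forall s, 0 <= s <= N -> Rabs (f s - M s) <= eta * Cseq K Sb m).
  { intros s Hs.
    apply (compare_f f M (fun x s => la1 lam x * lg1 lam s + la2 lam x * lg2 lam s)
             (fun x s => ra1 x * c1 s + c0 x * c0 s) N K eta Sb
             (lH0 lam f Hf) (rH0 M HM) (l_one lam Hlp f Hf) (r_one M HM)
             (l_kernel lam Hlp f Hf) (r_kernel M HM)
             (fun x Hx => l_kint lam Hlp f Hf _ _ x (Rlt_le _ _ Hx))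
             (fun x Hx => r_kint M HM _ _ x (Rlt_le _ _ Hx))
             Hb HS HK Heta HSp m); auto. unfold N; lra. }
  intros x Hx.
  apply (compare_u f M (fun x s => la1 lam x * lg1 lam s + la2 lam x * lg2 lam s)
             (fun x s => ra1 x * c1 s + c0 x * c0 s)
             (fun x s => lda lam x * lg1 lam s + lda lam x * lg2 lam s)
             (fun x s => rda1 x * c1 s + c0 x * c0 s) N K eta Sb
             Hb HS HK Heta HSp
             (l_ukernel lam Hlp f Hf) (r_ukernel M HM)
             (fun x Hx => l_kint lam Hlp f Hf _ _ x (Rlt_le _ _ Hx))
             (fun x Hx => r_kint M HM _ _ x (Rlt_le _ _ Hx))
             Hdb); auto.
  all: try (apply Cseq_pos; auto).
Qed.

Theorem theorem2 (Ml : R -> R -> R) (M : R -> R)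
  (HMl : forall lam, 0 < lam -> is_M_lambda lam (Ml lam))
  (HM : is_M_renyi M) :
  forall eps, 0 < eps ->
    exists delta, 0 < delta /\
      forall lam x, 0 < lam < delta -> 0 < x -> x <> 1 -> x <> 2 ->
        Rabs (Derive (Ml lam) x - Derive M x) < eps.
Proof.
  intros eps Heps.
  destruct (nat_above (576 / eps + 4)) as [m Hm].
  set (N := INR m + 1).
  assert (HN4 : 4 <= N).
  { unfold N. assert (0 < 576 / eps) by (apply Rdiv_lt_0_compat; lra). lra. }
  assert (H144 : 144 / N <= eps / 4).
  { assert (576 / eps < N) by (unfold N; lra).
    apply (Rmult_le_reg_r N). lra. unfold Rdiv. rewrite Rmult_assoc, Rinv_l by lra.
    assert (576 < eps * N).
    { apply (Rmult_lt_compat_l eps) in H; [|lra]. unfold Rdiv in H.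
      rewrite <- Rmult_assoc, (Rmult_comm eps 576), Rmult_assoc, Rinv_r in H by lra. lra. }
    lra. }
  set (c := Derive M N).
  assert (HR : forall y, N <= y -> Rabs (Derive M y - c) <= eps / 4).
  { apply r_maxp; auto. lra. intros y Hy. eapply Rle_trans. apply r_osc; auto. auto. }
  set (K := 2 * exp (2 * N)).
  set (Sb := 3 ^ m).
  set (Const := (1 + N) * (K * Cseq K Sb m + Sb)).
  assert (HC : 0 <= Const).
  { unfold Const. apply Rmult_le_pos. lra.
    assert (0 <= K) by (unfold K; pose proof (exp_pos (2 * N)); lra).
    assert (0 <= Sb) by (unfold Sb; apply pow_le; lra).
    assert (0 <= Cseq K Sb m) by (apply Cseq_pos; auto).
    apply Rplus_le_le_0_compat; auto. apply Rmult_le_pos; auto. }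
  set (e' := eps / (8 * (Const + 1))).
  assert (He' : 0 < e') by (unfold e'; apply Rdiv_lt_0_compat; lra).
  assert (Hln : 0 < ln (1 + e')).
  { rewrite <- ln_1. apply ln_increasing; lra. }
  exists (Rmin 1 (ln (1 + e') / (2 * N))). split.
  { apply Rmin_glb_lt. lra. apply Rdiv_lt_0_compat; lra. }
  intros lam y [Hl1 Hl2] Hy0 Hy1 Hy2.
  assert (Hlam1 : lam <= 1) by (pose proof (Rmin_l 1 (ln (1 + e') / (2 * N))); lra).
  assert (Hlam2 : lam < ln (1 + e') / (2 * N)) by (pose proof (Rmin_r 1 (ln (1 + e') / (2 * N))); lra).
  assert (Hexp : exp (2 * lam * N) < 1 + e').
  { rewrite <- (exp_ln (1 + e')) by lra. apply exp_increasing.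
    apply (Rmult_lt_compat_l (2 * N)) in Hlam2; [|lra].
    replace (2 * N * (ln (1 + e') / (2 * N))) with (ln (1 + e')) in Hlam2 by (field; lra). lra. }
  assert (Heta : 2 * (exp (2 * lam * N) - 1) * Const <= eps / 4).
  { apply Rle_trans with (2 * e' * Const).
    apply Rmult_le_compat_r; auto. lra.
    unfold e'. replace (2 * (eps / (8 * (Const + 1))) * Const) with (eps / 4 * (Const / (Const + 1))) by (field; lra).
    rewrite <- (Rmult_1_r (eps / 4)) at 2. apply Rmult_le_compat_l. lra.
    apply (Rmult_le_reg_r (Const + 1)). lra. unfold Rdiv. rewrite Rmult_assoc, Rinv_l by lra. lra. }
  assert (Hf : is_M_lambda lam (Ml lam)) by (apply HMl; lra).
  assert (Hfin : forall x, 1 < x <= N -> Rabs (Derive (Ml lam) (x + 1) - Derive M (x + 1)) <= eps / 4).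
  { intros x Hx. eapply Rle_trans. apply (fin_horizon (Ml lam) M lam m); auto. exact Heta. }
  destruct (Rlt_or_le y 2) as [Hy3|Hy3].
  { assert (Hc : 0 < y < 1 \/ 1 < y < 2) by (destruct (Rlt_or_le y 1); [left|right]; lra).
    rewrite (l_d0 lam Hl1 (Ml lam) Hf y Hc), (r_d0 M HM y Hc). rewrite Rminus_0_r, Rabs_R0. auto. }
  destruct (Rle_or_lt y (N + 1)) as [Hy4|Hy4].
  { replace y with ((y - 1) + 1) by ring. eapply Rle_lt_trans. apply Hfin. lra. lra. }
  assert (Hl : forall y, N <= y -> Rabs (Derive (Ml lam) y - c) <= eps / 2).
  { apply (l_maxp lam ltac:(lra) (Ml lam) Hf). lra.
    intros y' Hy'.
    replace (Derive (Ml lam) y' - c) with ((Derive (Ml lam) y' - Derive M y') + (Derive M y' - c)) by ring.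
    eapply Rle_trans. apply Rabs_triang.
    assert (Rabs (Derive M y' - c) <= eps / 4) by (apply HR; lra).
    assert (Rabs (Derive (Ml lam) y' - Derive M y') <= eps / 4).
    { replace y' with ((y' - 1) + 1) by ring. apply Hfin. lra. }
    lra. }
  assert (A1 := Rabs_le_inv _ _ (Hl y ltac:(lra))).
  assert (A2 := Rabs_le_inv _ _ (HR y ltac:(lra))).
  apply Rabs_def1; lra.
Qed.
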